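(* Let $R$ be an associative (unital) ring and let $\sigma\colon R\to R$ be an additive surjection with $\sigma(1)=1$. If $R$ is right Noetherian, then the non-associative skew power series ring $R[[X;\sigma]]$ is right Noetherian.
   Context: A right ideal of a non-associative ring $S$ is an additive subgroup $I$ with $Is\subseteq I$ for all $s\in S$; $S$ is right Noetherian if it satisfies the ascending chain condition on right ideals. $R[[X;\sigma]]$ is the set of formal power series $\sum_{i=0}^\infty r_iX^i$ with $r_i\in R$, with pointwise addition and multiplication $\left(\sum_m a_mX^m\right)\left(\sum_n b_nX^n\right)=\sum_{k}\left(\sum_{m+n=k}a_m\sigma^m(b_n)\right)X^k$, i.e. the extension of $(rX^m)(sX^n)=(r\sigma^m(s))X^{m+n}$ for $r,s\in R$, $m,n\in\mathbb{N}$; it is a unital, not necessarily associative ring. *)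

(* Defs.v *)
From mathcomp Require Import all_boot all_algebra.
Set Implicit Arguments. Unset Strict Implicit. Unset Printing Implicit Defensive.
Import GRing.Theory.
Local Open Scope ring_scope.

Record ringsig (T : Type) := RingSig {
  rs_zero : T; rs_add : T -> T -> T; rs_opp : T -> T; rs_mul : T -> T -> T }.

Definition right_ideal (T : Type) (S : ringsig T) (I : T -> Prop) : Prop :=
  [/\ I (rs_zero S),
      (forall x y, I x -> I y -> I (rs_add S x y)),
      (forall x, I x -> I (rs_opp S x)) &
      (forall x s, I x -> I (rs_mul S x s))].

Definition right_noetherian (T : Type) (S : ringsig T) : Prop :=
  forall I : nat -> T -> Prop,
    (forall n, right_ideal S (I n)) ->
    (forall n x, I n x -> I n.+1 x) ->
    exists N, forall n, (N <= n)%N -> forall x, I n x <-> I N x.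

Definition ring_sig (R : pzRingType) : ringsig R :=
  RingSig 0 (@GRing.add R) (@GRing.opp R) (@GRing.mul R).

Definition pseries (R : Type) := nat -> R.

(* Multiplication of R[[X;sigma]]:
   (sum a_m X^m)(sum b_n X^n) = sum_k (sum_{m+n=k} a_m sigma^m(b_n)) X^k. *)
Definition skew_mul (R : pzRingType) (sigma : R -> R) (a b : pseries R) : pseries R :=
  fun k => \sum_(m < k.+1) a m * iter m sigma (b (k - m)%N).

Definition skew_pseries_sig (R : pzRingType) (sigma : R -> R) : ringsig (pseries R) :=
  RingSig (fun _ => 0) (fun a b k => a k + b k) (fun a k => - a k)
          (@skew_mul R sigma).

(* Main.v *)
Require Import Defs.
From mathcomp Require Import all_boot all_algebra.
From mathcomp Require Import zify.
From Stdlib Require Import Classical ClassicalEpsilon FunctionalExtensionality.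
Import GRing.Theory.
Local Open Scope ring_scope.

Section Skew.
Variables (R : pzRingType) (sigma : R -> R).
Hypothesis sigma_add : forall x y : R, sigma (x + y) = sigma x + sigma y.
Hypothesis sigma_surj : forall y : R, exists x : R, sigma x = y.
Hypothesis sigma1 : sigma 1 = 1.

Definition ord_ge (f : pseries R) (n : nat) := forall i, (i < n)%N -> f i = 0.

Lemma mono_nat (P : nat -> Prop) : (forall n, P n -> P n.+1) ->
  forall n n', (n <= n')%N -> P n -> P n'.
Proof.
move=> H n n' Hle Pn; rewrite -(subnK Hle).
elim: (n' - n)%N => [|d IH]; first by rewrite add0n.
by rewrite addSn; apply: H.
Qed.

Definition span (l : seq R) (x : R) :=
  exists t : nat -> R, x = \sum_(j < size l) l`_j * t j.

Lemma span_ideal l : right_ideal (ring_sig R) (span l).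
Proof.
split => /=.
- by exists (fun _ => 0); rewrite big1 // => j _; rewrite mulr0.
- move=> x y [t1 ->] [t2 ->]; exists (fun j => t1 j + t2 j).
  by rewrite -big_split; apply: eq_bigr => j _; rewrite mulrDr.
- move=> x [t ->]; exists (fun j => - t j).
  by rewrite -sumrN; apply: eq_bigr => j _; rewrite mulrN.
- move=> x s [t ->]; exists (fun j => t j * s).
  by rewrite mulr_suml; apply: eq_bigr => j _; rewrite mulrA.
Qed.

Lemma span_cons y l x : span l x -> span (y :: l) x.
Proof.
move=> [t ->]; exists (fun j => if j is j'.+1 then t j' else 0).
rewrite /= big_ord_recl /= mulr0 add0r.
by apply: eq_bigr => j _; rewrite ?lift0.
Qed.

Lemma span_head y l : span (y :: l) y.
Proof.
exists (fun j => if j == 0%N then 1 else 0).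
rewrite /= big_ord_recl /= mulr1 big1 ?addr0 // => j _.
by rewrite ?lift0 /= mulr0.
Qed.

Lemma fg (A : R -> Prop) : right_noetherian (ring_sig R) ->
  right_ideal (ring_sig R) A ->
  exists l : seq R, (forall j, (j < size l)%N -> A l`_j) /\ forall x, A x -> span l x.
Proof.
move=> ACC HA; apply: NNPP => Hn.
have key : forall l : seq R, (forall j, (j < size l)%N -> A l`_j) ->
    exists y, A y /\ ~ span l y.
  move=> l Hl; apply: NNPP => Hc; apply: Hn; exists l; split => // x Ax.
  by apply: NNPP => Hs; apply: Hc; exists x.
pose next (l : seq R) := epsilon (inhabits 0) (fun y => A y /\ ~ span l y) :: l.
pose C k := iter k next [::].
have allin : forall k j, (j < size (C k))%N -> A (C k)`_j.
  elim=> [|k IH] j //=.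
  have [Ay _] := epsilon_spec (inhabits 0) _ (key _ IH).
  by case: j => [|j] //= Hj; apply: IH.
have [N HN] := ACC (fun k => span (C k)) (fun k => span_ideal (C k))
   (fun k x Hx => span_cons _ _ _ Hx).
have Hy := HN N.+1 (leqnSn N) (C N.+1)`_0.
have [_ Hns] := epsilon_spec (inhabits 0) _ (key _ (allin N)).
apply: Hns; apply/Hy; exact: span_head.
Qed.

Lemma double_chain (A : nat -> nat -> R -> Prop) :
  right_noetherian (ring_sig R) ->
  (forall n k, right_ideal (ring_sig R) (A n k)) ->
  (forall n k x, A n k x -> A n.+1 k x) ->
  (forall n k x, A n k x -> A n k.+1 x) ->
  exists N, forall k, (N <= k)%N -> forall n x, A n k x -> A n N x.
Proof.
move=> ACC HA Hn Hk.
have mono : forall n n' k k' x, (n <= n')%N -> (k <= k')%N -> A n k x -> A n' k' x.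
  move=> n n' k k' x Hnn Hkk H.
  apply: (@mono_nat (fun k0 => A n' k0 x) (fun k0 => Hk n' k0 x) k k' Hkk).
  exact: (@mono_nat (fun n0 => A n0 k x) (fun n0 => Hn n0 k x) n n' Hnn H).
have [m Hm] := ACC (fun k => A k k) (fun k => HA k k)
  (fun k x H => mono k k.+1 k k.+1 x (leqnSn k) (leqnSn k) H).
have low : forall M, exists N, forall n, (n < M)%N -> forall k, (N <= k)%N ->
    forall x, A n k x -> A n N x.
  elim=> [|M [N1 HN1]]; first by exists 0%N.
  have [N2 HN2] := ACC (fun k => A M k) (fun k => HA M k) (fun k x => Hk M k x).
  exists (maxn N1 N2) => n; rewrite ltnS leq_eqVlt => /orP [/eqP -> | Hlt] k Hk' x Hx.
  - have Hk2 : (N2 <= k)%N by apply: leq_trans (leq_maxr N1 N2) Hk'.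
    apply: (mono M M N2) => //; first exact: leq_maxr.
    exact: (proj1 (HN2 k Hk2 x) Hx).
  - have Hk1 : (N1 <= k)%N by apply: leq_trans (leq_maxl N1 N2) Hk'.
    apply: (mono n n N1) => //; first exact: leq_maxl.
    exact: (HN1 n Hlt k Hk1 x Hx).
have [N HN] := low m.
exists (maxn m N) => k Hk' n x Hx.
case: (ltnP n m) => Hnm.
- have Hk1 : (N <= k)%N by apply: leq_trans (leq_maxr m N) Hk'.
  apply: (mono n n N) => //; first exact: leq_maxr.
  exact: (HN n Hnm k Hk1 x Hx).
- have Hd : A (maxn n k) (maxn n k) x.
    by apply: (mono n _ k) => //; [exact: leq_maxl | exact: leq_maxr].
  have Hle : (m <= maxn n k)%N by apply: leq_trans Hnm (leq_maxl _ _).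
  have Hmm : A m m x := proj1 (Hm _ Hle x) Hd.
  apply: (mono m n m) => //; exact: leq_maxl.
Qed.

Lemma sigma0 : sigma 0 = 0.
Proof. by apply: (addrI (sigma 0)); rewrite -sigma_add !addr0. Qed.
Lemma iter_add n x y : iter n sigma (x + y) = iter n sigma x + iter n sigma y.
Proof. by elim: n => //= n ->; rewrite sigma_add. Qed.
Lemma iter0 n : iter n sigma 0 = 0.
Proof. by elim: n => //= n ->; rewrite sigma0. Qed.
Lemma iter1 n : iter n sigma 1 = 1.
Proof. by elim: n => //= n ->; rewrite sigma1. Qed.
Lemma iter_surj n y : exists x, iter n sigma x = y.
Proof.
elim: n y => [|n IH] y; first by exists y.
have [z Hz] := sigma_surj y; have [x Hx] := IH z.
by exists x; rewrite /= Hx.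
Qed.

Definition single (d : nat) (c : R) : pseries R := fun i => if i == d then c else 0.

Lemma mul_single f d c k : skew_mul sigma f (single d c) k =
  if (d <= k)%N then f (k - d)%N * iter (k - d) sigma c else 0.
Proof.
rewrite /skew_mul /single; case: leqP => Hdk.
- have Hlt : (k - d < k.+1)%N by rewrite ltnS leq_subr.
  rewrite (bigD1 (Ordinal Hlt)) //= subKn // eqxx big1 ?addr0 // => i Hi.
  have -> : ((k - i)%N == d) = false.
    apply/negbTE/eqP => Hkd; move/eqP: Hi; apply; apply: val_inj => /=.
    have := ltn_ord i; lia.
  by rewrite iter0 mulr0.
- rewrite big1 // => i _.
  have -> : ((k - i)%N == d) = false.
    by apply/negbTE; rewrite neq_ltn (leq_ltn_trans (leq_subr _ _) Hdk).
  by rewrite iter0 mulr0.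
Qed.

Lemma mul_addr f h h' k : skew_mul sigma f (fun i => h i + h' i) k
  = skew_mul sigma f h k + skew_mul sigma f h' k.
Proof. by rewrite /skew_mul -big_split; apply: eq_bigr => i _; rewrite iter_add mulrDr. Qed.
Lemma mul_local f h h' k : (forall i, (i <= k)%N -> h i = h' i) ->
  skew_mul sigma f h k = skew_mul sigma f h' k.
Proof. by move=> H; apply: eq_bigr => i _; rewrite H // leq_subr. Qed.
Lemma mul0r' f k : skew_mul sigma f (fun _ => 0) k = 0.
Proof. by apply: big1 => i _; rewrite iter0 mulr0. Qed.

Definition Lc (n : nat) (I : pseries R -> Prop) (x : R) :=
  exists f, I f /\ ord_ge f n /\ f n = x.
Definition SI := right_ideal (skew_pseries_sig sigma).

Lemma Lc_ideal I n : SI I -> right_ideal (ring_sig R) (Lc n I).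
Proof.
case=> I0 Iadd Iopp Imul; split => /=.
- by exists (fun _ => 0); split.
- move=> x y [f [If [Of <-]]] [g [Ig [Og <-]]].
  exists (fun k => f k + g k); split; first exact: Iadd.
  by split => // i Hi; rewrite Of // Og // addr0.
- move=> x [f [If [Of <-]]]; exists (fun k => - f k); split; first exact: Iopp.
  by split => // i Hi; rewrite Of // oppr0.
- move=> x s [f [If [Of <-]]].
  have [c Hc] := iter_surj n s.
  exists (skew_mul sigma f (single 0 c)); split; first exact: Imul.
  split => [i Hi|]; rewrite mul_single leq0n /= subn0.
  + by rewrite Of // mul0r.
  + by rewrite Hc.
Qed.

Lemma Lc_S I n x : SI I -> Lc n I x -> Lc n.+1 I x.
Proof.
case=> _ _ _ Imul [f [If [Of <-]]].
exists (skew_mul sigma f (single 1 1)); split; first exact: Imul.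
split => [i Hi|]; rewrite mul_single.
- case: ifP => // H1; rewrite Of ?mul0r //; lia.
- by rewrite ltn0Sn subn1 /= iter1 mulr1.
Qed.

Lemma Lc_mono I n n' x : SI I -> (n <= n')%N -> Lc n I x -> Lc n' I x.
Proof. move=> HI; exact: (@mono_nat (fun k => Lc k I x) (fun k => @Lc_S I k x HI)). Qed.

Lemma Lc_I I J n x : (forall f, I f -> J f) -> Lc n I x -> Lc n J x.
Proof. by move=> IJ [f [If H]]; exists f; split => //; apply: IJ. Qed.

Definition Linf I x := exists n, Lc n I x.

Lemma Linf_ideal I : SI I -> right_ideal (ring_sig R) (Linf I).
Proof.
move=> HI; split => /=.
- exists 0%N; have [H0 _ _ _] := Lc_ideal I 0 HI; exact: H0.
- move=> x y [n Hx] [n' Hy]; exists (maxn n n').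
  have [_ Ladd _ _] := Lc_ideal I (maxn n n') HI; apply: Ladd.
  + exact: Lc_mono HI (leq_maxl n n') Hx.
  + exact: Lc_mono HI (leq_maxr n n') Hy.
- move=> x [n Hx]; exists n; have [_ _ Lopp _] := Lc_ideal I n HI; exact: Lopp.
- move=> x s [n Hx]; exists n; have [_ _ _ Lmul] := Lc_ideal I n HI; exact: Lmul.
Qed.

Lemma Linf_common J p (a : nat -> R) : SI J -> (forall j, (j < p)%N -> Linf J (a j)) ->
  exists m, forall j, (j < p)%N -> Lc m J (a j).
Proof.
move=> HJ; elim: p => [|p IH] Ha; first by exists 0%N.
have [m Hm] := IH (fun j Hj => Ha j (leqW Hj)).
have [n Hn] := Ha p (ltnSn p).
exists (maxn m n) => j; rewrite ltnS leq_eqVlt => /orP [/eqP -> | Hj].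
- exact: Lc_mono HJ (leq_maxr m n) Hn.
- exact: Lc_mono HJ (leq_maxl m n) (Hm j Hj).
Qed.

Lemma sum_in I p (F : nat -> pseries R) : SI I -> (forall j, (j < p)%N -> I (F j)) ->
  I (fun k => \sum_(j < p) F j k).
Proof.
case=> I0 Iadd _ _; elim: p => [|p IH] HF.
  have -> : (fun k => \sum_(j < 0) F j k) = (fun _ => 0).
    by apply: functional_extensionality => k; rewrite big_ord0.
  exact: I0.
have -> : (fun k => \sum_(j < p.+1) F j k) =
          (fun k => (fun k => \sum_(j < p) F j k) k + F p k).
  by apply: functional_extensionality => k; rewrite big_ord_recr.
apply: (Iadd (fun k => \sum_(j < p) F j k) (F p)); last exact: HF.
by apply: IH => j Hj; apply: HF; apply: leqW.
Qed.

Lemma reduce I J m : SI I -> SI J -> (forall f, I f -> J f) ->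
  (forall n x, Lc n J x -> Lc n I x) ->
  forall g, J g -> exists f, I f /\ ord_ge (fun i => g i - f i) m.
Proof.
move=> HI HJ IJ HL g Jg.
elim: m => [|n [f [If Of]]].
  by exists (fun _ => 0); split => //; case: HI.
have [_ Jadd Jopp _] := HJ.
have Jgf : J (fun i => g i - f i) by exact: (Jadd _ _ Jg (Jopp _ (IJ _ If))).
have [f' [If' [Of' Ef']]] := HL n _ (ex_intro _ _ (conj Jgf (conj Of erefl))).
exists (fun i => f i + f' i); split.
  by have [_ Iadd _ _] := HI; exact: (Iadd f f').
move=> i; rewrite ltnS leq_eqVlt => /orP [/eqP -> | Hi] /=.
  by rewrite opprD addrA Ef' /= subrr.
by rewrite opprD addrA (Of i Hi) Of' // subr0.
Qed.

Section Core.
Variables (I J : pseries R -> Prop) (p m : nat) (fs : nat -> pseries R) (g : pseries R).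
Hypothesis HI : SI I.
Hypothesis HJ : SI J.
Hypothesis IJ : forall f, I f -> J f.
Hypothesis fsI : forall j, (j < p)%N -> I (fs j).
Hypothesis fsord : forall j, (j < p)%N -> ord_ge (fs j) m.
Hypothesis Hspan : forall n x, Lc n J x -> exists t : nat -> R, x = \sum_(j < p) fs j m * t j.
Hypothesis Jg : J g.
Hypothesis gord : ord_ge g m.

Definition rem (H : nat -> pseries R) : pseries R :=
  fun k => g k - \sum_(j < p) skew_mul sigma (fs j) (H j) k.

Lemma rem_J H : J (rem H).
Proof.
have [_ Jadd Jopp _] := HJ.
have HS : J (fun k => \sum_(j < p) skew_mul sigma (fs j) (H j) k).
  apply: (sum_in J p (fun j => skew_mul sigma (fs j) (H j)) HJ) => j Hj; apply: IJ; have [_ _ _ Imul] := HI; exact: (Imul _ _ (fsI j Hj)).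
exact: (Jadd _ _ Jg (Jopp _ HS)).
Qed.

Definition upd (H : nat -> pseries R) d (c : nat -> R) : nat -> pseries R :=
  fun j i => H j i + single d (c j) i.

Lemma step_ex H d : ord_ge (rem H) (m + d) ->
  exists c, ord_ge (rem (upd H d c)) (m + d).+1.
Proof.
move=> Hord.
have [t Ht] : exists t : nat -> R, rem H (m + d)%N = \sum_(j < p) fs j m * t j.
  apply: (Hspan (m + d)%N); exists (rem H); split; [exact: rem_J | by split].
pose c j := proj1_sig (constructive_indefinite_description _ (iter_surj m (t j))).
have Hc : forall j, iter m sigma (c j) = t j.
  move=> j; exact: proj2_sig (constructive_indefinite_description _ (iter_surj m (t j))).
exists c => i Hi.
have E : rem (upd H d c) i = rem H i - \sum_(j < p) skew_mul sigma (fs j) (single d (c j)) i.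
  rewrite /rem /upd.
  under eq_bigr => j _ do rewrite mul_addr.
  by rewrite big_split /= opprD addrA.
rewrite E; move: Hi; rewrite ltnS leq_eqVlt => /orP [/eqP -> | Hlt].
- rewrite Ht -sumrB big1 // => j _.
  by rewrite mul_single leq_addl /= addnK Hc subrr.
- rewrite Hord // big1 ?subr0 // => j _.
  rewrite mul_single; case: ifP => // Hdi.
  rewrite (fsord _ (ltn_ord j)) ?mul0r //; lia.
Qed.

Definition choose_c H d : nat -> R :=
  epsilon (inhabits (fun _ => 0)) (fun c => ord_ge (rem (upd H d c)) (m + d).+1).

Fixpoint Hs (d : nat) : nat -> pseries R :=
  if d is d'.+1 then upd (Hs d') d' (choose_c (Hs d') d') else (fun _ _ => 0).

Lemma Hs_inv d : ord_ge (rem (Hs d)) (m + d).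
Proof.
elim: d => [|d IH] i Hi.
- rewrite /rem big1 ?subr0; first by apply: gord; rewrite addn0 in Hi.
  move=> j _; exact: mul0r'.
- rewrite addnS in Hi; have HH := epsilon_spec (inhabits (fun _ : nat => (0:R))) _ (step_ex _ _ IH); exact: (HH i Hi).
Qed.

Lemma Hs_stable d e j : (d < e)%N -> Hs e j d = Hs d.+1 j d.
Proof.
elim: e => [|e IH] //; rewrite ltnS leq_eqVlt => /orP [/eqP -> // | Hlt].
transitivity (Hs e j d); last exact: IH.
rewrite /= /upd /single.
have -> : (d == e) = false by apply/negbTE; rewrite neq_ltn Hlt.
by rewrite addr0.
Qed.

Lemma core : I g.
Proof.
pose hl j i := Hs i.+1 j i.
have Eg : g = (fun k => \sum_(j < p) skew_mul sigma (fs j) (hl j) k).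
  apply: functional_extensionality => k.
  have := Hs_inv k.+1 k (ltn_addl m (ltnSn k)).
  rewrite /rem => /eqP; rewrite subr_eq0 => /eqP ->.
  apply: eq_bigr => j _; apply: mul_local => i Hi.
  by rewrite /hl Hs_stable.
rewrite Eg; apply: (sum_in I p (fun j => skew_mul sigma (fs j) (hl j)) HI) => j Hj; have [_ _ _ Imul] := HI; exact: (Imul _ _ (fsI j Hj)).
Qed.

End Core.

Lemma main : right_noetherian (ring_sig R) -> right_noetherian (skew_pseries_sig sigma).
Proof.
move=> ACC I HI Hinc.
have HA : forall n k, right_ideal (ring_sig R) (Lc n (I k)).
  by move=> n k; exact: (Lc_ideal (I k) n (HI k)).
have [N HN] := double_chain (fun n k => Lc n (I k)) ACC HA (fun n k x => Lc_S (I k) n x (HI k))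
  (fun n k x => Lc_I (I k) (I k.+1) n x (Hinc k)).
have [l [Hl Hsp]] := fg (Linf (I N)) ACC (Linf_ideal (I N) (HI N)).
have [m Hm] := Linf_common (I N) (size l) (fun j => l`_j) (HI N) Hl.
pose fs j := epsilon (inhabits (fun _ : nat => (0:R)))
  (fun f => I N f /\ ord_ge f m /\ f m = l`_j).
have Hfs : forall j, (j < size l)%N -> I N (fs j) /\ ord_ge (fs j) m /\ fs j m = l`_j.
  move=> j Hj; exact: (epsilon_spec _ _ (Hm j Hj)).
exists N => k Hk g; split; last first.
  move=> HgN; exact: (@mono_nat (fun k => I k g) (fun k => Hinc k g) N k Hk HgN).
move=> Hg.
have INk : forall f, I N f -> I k f :=
  fun f Hf => @mono_nat (fun k => I k f) (fun k => Hinc k f) N k Hk Hf.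
have HL : forall n x, Lc n (I k) x -> Lc n (I N) x := fun n x => HN k Hk n x.
have [f [If Of]] := reduce (I N) (I k) m (HI N) (HI k) INk HL g Hg.
have Hspan : forall n x, Lc n (I k) x ->
    exists t : nat -> R, x = \sum_(j < size l) fs j m * t j.
  move=> n x Hx; have [t Ht] := Hsp x (ex_intro _ n (HL n x Hx)).
  exists t; rewrite Ht; apply: eq_bigr => j _.
  by have [_ [_ ->]] := Hfs j (ltn_ord j).
have Hgf : I N (fun i => g i - f i).
  have [_ Kadd Kopp _] := HI k.
  apply: (core (I N) (I k) (size l) m fs (fun i => g i - f i) (HI N) (HI k) INk (fun j Hj => (Hfs j Hj).1)
            (fun j Hj => (Hfs j Hj).2.1) Hspan) => //.
  exact: (Kadd _ _ Hg (Kopp _ (INk _ If))).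
have -> : g = (fun i => (fun i => g i - f i) i + f i).
  by apply: functional_extensionality => i; rewrite subrK.
have [_ Iadd _ _] := HI N; exact: (Iadd _ _ Hgf If).
Qed.

End Skew.

Theorem theorem19 (R : pzRingType) (sigma : R -> R)
  (sigma_add : forall x y : R, sigma (x + y) = sigma x + sigma y)
  (sigma_surj : forall y : R, exists x : R, sigma x = y)
  (sigma1 : sigma 1 = 1) :
  right_noetherian (ring_sig R) ->
  right_noetherian (skew_pseries_sig sigma).
Proof. exact: (@main R sigma sigma_add sigma_surj sigma1). Qed.
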